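(* With $\mathcal I_s$ as defined in the context, the probability that a uniformly random $(E,G_{p,n})\in\mathcal I_s$, with $E$ having constants $c_j=(\bar c_j,\beta_j)$, $j=1,\dots,m$, satisfies $\beta_i\neq1$ for some $i$, tends to $1$ exponentially fast as $s\to\infty$.
   Context: For a prime $p$ and $n\in\mathbb{N}$, $G_{p,n}=\mathbb{Z}_p^n\rtimes\mathbb{Z}_p^\ast$ is the set of pairs $(\bar x,\alpha)$ with $\bar x\in\mathbb{Z}_p^n$, $\alpha\in\mathbb{Z}_p^\ast$, with multiplication $(\bar x,\alpha)(\bar y,\beta)=(\bar x+\alpha\bar y,\alpha\beta)$. For $s\in\mathbb{N}$, $\mathcal I_s$ is the set of all pairs $(E,G_{p,n})$ where $p\le s$ is prime, $1\le n\le s$, $1\le m\le s$, and $E$ is a spherical equation $\prod_{j=1}^m z_j^{-1}c_jz_j=1$ with constants $c_1,\dots,c_m\in G_{p,n}$ (identified with $(c_1,\dots,c_m)\in G_{p,n}^m$), equipped with the uniform distribution. *)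

(* Defs.v *)
From HB Require Import structures.
From mathcomp Require Import all_boot all_order all_algebra.
Set Implicit Arguments. Unset Strict Implicit. Unset Printing Implicit Defensive.
Import GRing.Theory Num.Theory.

(* G_{p,n} = Z_p^n ⋊ Z_p^*: elements are pairs (xbar, alpha). *)
Definition Gpn (p n : nat) : finType := ('rV['Z_p]_n * {unit 'Z_p})%type.

Definition Gmul (p n : nat) (g h : Gpn p n) : Gpn p n :=
  ((g.1 + (val g.2) *: h.1)%R, (g.2 * h.2)%g).

(* parameters (p, n, m) allowed in I_s : p <= s prime, 1 <= n <= s, 1 <= m <= s *)
Definition params (s : nat) : finType :=
  { t : 'I_s.+1 * 'I_s.+1 * 'I_s.+1 |
      prime t.1.1 && (0 < t.1.2)%N && (0 < t.2)%N }.

Definition par_p s (t : params s) : nat := (val t).1.1.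
Definition par_n s (t : params s) : nat := (val t).1.2.
Definition par_m s (t : params s) : nat := (val t).2.

(* a spherical equation with m constants c_1..c_m in G_{p,n} is identified
   with (c_1,...,c_m) in G_{p,n}^m *)
Definition eqns s (t : params s) : finType :=
  {ffun 'I_(par_m t) -> Gpn (par_p t) (par_n t)}.

Definition Inst (s : nat) : finType := {t : params s & eqns t}.

Definition some_beta_ne1 s (x : Inst s) : bool :=
  [exists i, val (projT2 x i).2 != 1%R].

Definition prob_beta_ne1 (s : nat) : rat :=
  (#|[set x : Inst s | some_beta_ne1 x]|%:R / #|Inst s|%:R)%R.

(* Main.v *)
Require Import Defs.
From mathcomp Require Import all_boot all_order all_algebra.
From mathcomp Require Import zify.
Import GRing.Theory Num.Theory.
Set Implicit Arguments. Unset Strict Implicit. Unset Printing Implicit Defensive.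

Lemma card_Zp_type p : (1 < p)%N -> #|{: 'Z_p}| = p.
Proof. by move=> hp; rewrite card_ord Zp_cast. Qed.

Lemma card_unit_Zp p : prime p -> #|{: {unit 'Z_p}}| = p.-1.
Proof.
move=> pp; have := card_units_Zp (prime_gt0 pp).
by rewrite cardsT totient_prime.
Qed.

Lemma card_Gpn p n : prime p -> #|{: Gpn p n}| = (p ^ n * p.-1)%N.
Proof.
move=> pp; rewrite /Gpn card_prod card_mx card_Zp_type ?prime_gt1 //.
by rewrite card_unit_Zp // mul1n.
Qed.

Lemma card_eqns s (t : params s) :
  #|{: eqns t}| = ((par_p t ^ par_n t * (par_p t).-1) ^ par_m t)%N.
Proof.
have pp : prime (par_p t) by rewrite /par_p; case/andP: (proj2_sig t) => /andP[].
by rewrite /eqns card_ffun card_Gpn // card_ord.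
Qed.

Definition badset s (t : params s) : {set eqns t} :=
  [set f : eqns t | [forall i, val (f i).2 == 1%R]].

Lemma card_badset s (t : params s) :
  (#|badset t| <= (par_p t ^ par_n t) ^ par_m t)%N.
Proof.
have pp : prime (par_p t) by rewrite /par_p; case/andP: (proj2_sig t) => /andP[].
pose g (h : {ffun 'I_(par_m t) -> 'rV['Z_(par_p t)]_(par_n t)}) : eqns t :=
  [ffun i => (h i, 1%g)].
apply: (@leq_trans #|[set g h | h in [set: {ffun 'I_(par_m t) -> 'rV['Z_(par_p t)]_(par_n t)}]]|).
  apply: subset_leq_card; apply/subsetP => f; rewrite inE => /forallP Hf.
  apply/imsetP; exists [ffun i => (f i).1]; first by rewrite inE.
  apply/ffunP => i; rewrite !ffunE; case: (f i) (Hf i) => a b /= /eqP hb.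
  by congr pair; apply: val_inj.
apply: leq_trans (leq_imset_card _ _) _.
by rewrite cardsT card_ffun card_mx card_Zp_type ?prime_gt1 // card_ord mul1n.
Qed.

Lemma prime_max3 (q : nat) : prime q -> prime (maxn q 3).
Proof.
by move=> pq; rewrite /maxn; case: ifP.
Qed.

Lemma exists_big s (t : params s) : (3 <= s)%N ->
  exists u : params s, ((par_p t ^ par_n t) ^ par_m t * 2 ^ s <= #|{: eqns u}|)%N.
Proof.
move=> hs.
case: t => [[[p n] m] H]; have /andP[/andP[pp n0] m0] := H.
rewrite /par_p /par_n /par_m /=.
have hp' : (maxn p 3 < s.+1)%N by rewrite ltnS geq_max -ltnS ltn_ord.
have pp' : prime (maxn p 3).
  exact: prime_max3.
pose u : params s := exist _ ((Ordinal hp', n), Ordinal (ltnSn s))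
   (introT andP (conj (introT andP (conj pp' n0)) (leq_trans (ltnW (ltnW hs)) (leqnn s)))).
exists u; rewrite card_eqns /par_p /par_n /par_m /= expnMn.
have m0' : (0 < m)%N := m0.
have n0' : (0 < n)%N := n0.
have hm3 : (3 <= maxn p 3)%N by rewrite leq_maxr.
apply: leq_mul.
  apply: (@leq_trans ((maxn p 3 ^ n) ^ m)).
    by rewrite leq_exp2r // leq_exp2r ?leq_maxl.
  apply: leq_pexp2l; first by rewrite expn_gt0 (leq_trans _ hm3).
  by rewrite -ltnS ltn_ord.
rewrite leq_exp2r; last by rewrite (leq_trans _ hs).
by rewrite -subn1 leq_subRL ?leq_maxr // (leq_trans _ hm3).
Qed.

Lemma bad_le_sum s :
  (#|[set x : Inst s | ~~ some_beta_ne1 x]| <= \sum_(t : params s) #|badset t|)%N.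
Proof.
rewrite -sum1_card (partition_big (fun x : Inst s => tag x) predT) //=.
apply: leq_sum => t _.
rewrite sum1_card.
apply: (@leq_trans #|[set Tagged (fun t => eqns t) f | f in badset t]|); last first.
  exact: leq_imset_card.
apply: subset_leq_card; apply/subsetP => x; rewrite unfold_in /=.
move=> /andP[Hb /eqP Ht]; case: x Hb Ht => t' f /= Hb Ht; subst t'.
apply/imsetP; exists f => //.
rewrite inE; apply/forallP => i; move: Hb; rewrite inE /some_beta_ne1 /=; apply: contraR => Hi.
by apply/existsP; exists i.
Qed.

Lemma eqns_le_Inst s (u : params s) : (#|{: eqns u}| <= #|{: Inst s}|)%N.
Proof.
apply: (@leq_card _ _ (Tagged (fun t => eqns t) (i:=u))).
by move=> a b H; exact: eq_from_Tagged H.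
Qed.

Lemma card_params s : (#|{: params s}| <= s.+1 ^ 3)%N.
Proof.
have := @leq_card (params s) _ (fun t : params s => sval t) val_inj.
by rewrite !card_prod !card_ord !expnS expn0 muln1 mulnA.
Qed.

Lemma bad_count s : (3 <= s)%N ->
  (#|[set x : Inst s | ~~ some_beta_ne1 x]| * 2 ^ s <= s.+1 ^ 3 * #|{: Inst s}|)%N.
Proof.
move=> hs.
apply: leq_trans (leq_mul (bad_le_sum s) (leqnn _)) _.
rewrite big_distrl /=.
apply: (@leq_trans (\sum_(t : params s) #|{: Inst s}|)).
  apply: leq_sum => t _.
  have [u Hu] := exists_big t hs.
  apply: leq_trans (eqns_le_Inst u).
  by apply: leq_trans Hu; rewrite leq_mul2r card_badset orbT.
by rewrite sum_nat_const leq_mul2r card_params orbT.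
Qed.

Lemma numeric s : (s.+1 ^ 3 * 2 ^ s <= 32 * 3 ^ s)%N.
Proof.
elim: s => [|s IH]; first by [].
case: (ltnP s 6) => hs.
  by case: s IH hs => [|[|[|[|[|[|s]]]]]].
rewrite [2 ^ _]expnS [3 ^ _]expnS.
have h : (2 * s.+2 ^ 3 <= 3 * s.+1 ^ 3)%N.
  have -> : s = (s - 6) + 6 by rewrite subnK.
  move: (s - 6) => k; rewrite !expnS expn0; nia.
apply: (@leq_trans (3 * (s.+1 ^ 3 * 2 ^ s))).
  by rewrite mulnCA mulnA mulnA leq_mul2r h orbT.
by rewrite [32 * _]mulnCA leq_mul2l IH orbT.
Qed.

Lemma key s : (2 <= s)%N ->
  (#|[set x : Inst s | ~~ some_beta_ne1 x]| * 4 ^ s <= 32 * 3 ^ s * #|{: Inst s}|)%N.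
Proof.
move=> hs; case: (ltnP s 3) => h3.
  have -> : s = 2 by apply/eqP; rewrite eqn_leq hs -ltnS h3.
  rewrite mulnC; apply: leq_mul; first by [].
  by apply: max_card.
have := bad_count h3; have := numeric s => Hn Hb.
rewrite (_ : 4 = 2 * 2)%N // expnMn mulnA.
apply: (@leq_trans (s.+1 ^ 3 * #|{: Inst s}| * 2 ^ s)); first by rewrite leq_mul2r Hb orbT.
by rewrite mulnAC leq_mul2r Hn orbT.
Qed.

Lemma Inst_gt0 s : (2 <= s)%N -> (0 < #|{: Inst s}|)%N.
Proof.
move=> hs.
have h2 : (2 < s.+1)%N by [].
have h1 : (1 < s.+1)%N by rewrite ltnS (leq_trans _ hs).
pose t0 : params s := exist _ ((Ordinal h2, Ordinal h1), Ordinal h1) (erefl true).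
apply/card_gt0P.
exists (Tagged (fun t => eqns t) ([ffun _ => (0%R, 1%g)] : eqns t0)).
by [].
Qed.

Local Open Scope ring_scope.
Theorem lemma4p4 :
  exists (C q : rat), 0 < C /\ 0 < q < 1 /\
    forall s : nat, (2 <= s)%N -> 1 - prob_beta_ne1 s <= C * q ^+ s.
Proof.
exists 32%:R, (3%:R / 4%:R); split; first by [].
split; first by [].
move=> s hs.
have Tp := Inst_gt0 hs; have K := key hs.
set T := #|{: Inst s}| in Tp K *.
set F := #|[set x : Inst s | ~~ some_beta_ne1 x]| in K *.
have HFG : (#|[set x : Inst s | some_beta_ne1 x]| + F = T)%N.
  rewrite /F.
  have -> : [set x : Inst s | ~~ some_beta_ne1 x] = ~: [set x | some_beta_ne1 x].
    by apply/setP => x; rewrite !inE.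
  by rewrite cardsC.
have Tr : (0 : rat) < T%:R by rewrite ltr0n.
have -> : 1 - prob_beta_ne1 s = F%:R / T%:R.
  rewrite /prob_beta_ne1 -/T -{1}(@divff _ T%:R) ; last by rewrite pnatr_eq0 -lt0n.
  by rewrite -HFG natrD mulrDl addrAC subrr add0r.
have h4 : (0 : rat) < 4%:R ^+ s by apply: exprn_gt0.
rewrite (ler_pdivrMr _ _ Tr) expr_div_n mulrA.
rewrite mulrAC (ler_pdivlMr _ _ h4).
by rewrite -!natrX -!natrM ler_nat.
Qed.
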